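(* Fix an integer $r \geq 2$. There exist constants $\alpha > 0$ and $C' > 0$ such that for all integers $n \geq 1$, $m \leq n$ and $2 \leq k \leq m$, the probability that a random DFA with $n$ states over an alphabet of size $r$ contains a $k$-periodic closed communicating class of size $m$ is at most $C' e^{-\alpha m}$.
   Context: A DFA is a tuple $A = \langle \Sigma, Q, q_0, \tau, \phi\rangle$ with finite alphabet $\Sigma$, finite state set $Q$, initial state $q_0$, transition function $\tau : Q \times \Sigma \to Q$ and termination function $\phi : Q \to \{0,1\}$. Extend $\tau$ to strings as usual and write $\tau_\star(S) = \{\tau(q,x) : q \in S, x \in \Sigma^\star\}$ and $\tau_1(S) = \{\tau(q,\sigma): q \in S, \sigma \in \Sigma\}$ for $S \subseteq Q$. Two states communicate if each is reachable from the other by some string; the equivalence classes are communicating classes. A communicating class $Q'$ is closed if $\tau_\star(Q') = Q'$. For $k > 1$, a closed communicating class $Q'$ is $k$-periodic if there is a partition of $Q'$ into $k$ nonempty parts $Q'_0,\ldots,Q'_{k-1}$ with $\tau_1(Q'_i) = Q'_{(i+1) \bmod k}$ for all $i$. A random DFA with $n$ states over an alphabet $\Sigma$ of size $r$: $Q = [n]$, initial state uniform in $Q$, each $\tau(q,\sigma)$ uniform in $Q$, each $\phi(q)$ uniform in $\{0,1\}$, all independent. *)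

(* Defs.v *)
From Stdlib Require Import Reals ClassicalEpsilon.
From mathcomp Require Import all_boot.
Set Implicit Arguments. Unset Strict Implicit. Unset Printing Implicit Defensive.

(* States Q = 'I_n, alphabet Sigma = 'I_r. A DFA is (q0, tau, phi). *)
Definition trans (n r : nat) := {ffun 'I_n * 'I_r -> 'I_n}.
Definition dfa (n r : nat) : finType :=
  ('I_n * {ffun 'I_n * 'I_r -> 'I_n} * {ffun 'I_n -> bool})%type.

Section DFA.
Variables (n r : nat) (tau : trans n r).

Definition tau_star (q : 'I_n) (x : seq 'I_r) : 'I_n :=
  foldl (fun p s => tau (p, s)) q x.

Definition reachable (p q : 'I_n) : Prop := exists x : seq 'I_r, tau_star p x = q.
Definition communicate (p q : 'I_n) : Prop := reachable p q /\ reachable q p.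

Definition comm_class (S : {set 'I_n}) : Prop :=
  exists p : 'I_n, forall q, q \in S <-> communicate p q.

Definition closed_set (S : {set 'I_n}) : Prop :=
  forall q, (exists p x, p \in S /\ tau_star p x = q) <-> q \in S.

Definition tau1 (S : {set 'I_n}) : {set 'I_n} :=
  [set tau ps | ps in setX S [set: 'I_r]].

Definition periodic (k : nat) (S : {set 'I_n}) : Prop :=
  (1 < k)%N /\
  exists P : nat -> {set 'I_n},
    (forall i, (i < k)%N -> P i != set0) /\
    (forall i j, (i < k)%N -> (j < k)%N -> i <> j -> [disjoint P i & P j]) /\
    S = \bigcup_(i < k) P i /\
    (forall i, (i < k)%N -> tau1 (P i) = P ((i + 1) %% k)).

Definition has_periodic_class (m k : nat) : Prop :=
  exists S : {set 'I_n},
    comm_class S /\ closed_set S /\ periodic k S /\ #|S| = m.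
End DFA.

Definition pb (P : Prop) : bool :=
  if excluded_middle_informative P then true else false.

(* probability under the uniform random DFA (q0, tau, phi all uniform, independent) *)
Definition prob_periodic (n r m k : nat) : R :=
  Rdiv (INR #|[set A : dfa n r | pb (has_periodic_class A.1.2 m k)]|)
       (INR #|[set: dfa n r]|).

(* Main.v *)
Require Import Defs.
From Stdlib Require Import Reals.
From mathcomp Require Import all_boot.
From Stdlib Require Import Lra Psatz ClassicalEpsilon.
From Coquelicot Require Import Coquelicot.
From mathcomp Require Import all_order all_algebra zify.
Set Implicit Arguments. Unset Strict Implicit. Unset Printing Implicit Defensive.
Import Order.TTheory GRing.Theory Num.Theory.

Section RealPart.
Local Open Scope R_scope.

Definition cc : R := ln (33/25).

Lemma cc_gt : / 4 < cc.
Proof.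
  rewrite /cc.
  have H1 : exp 1 <= 3 by apply: exp_le_3.
  have H2 : exp (/4) ^ 4 = exp 1.
  { rewrite /= Rmult_1_r -!exp_plus; f_equal; field. }
  have H3 : exp (/4) < 33/25.
  { destruct (Rlt_or_le (exp (/4)) (33/25)) as [h|h]; auto.
    have : (33/25) ^ 4 <= exp (/4) ^ 4 by apply: pow_incr; lra.
    rewrite H2 /=; lra. }
  rewrite -(ln_exp (/4)). apply: ln_increasing. apply: exp_pos. exact: H3.
Qed.

Lemma lnL (v : R) : 1 <= v -> ln v <= (v - 1) * (cc + / v).
Proof.
  move=> Hv.
  destruct (Req_dec v 1) as [E|Hne].
  { rewrite E ln_1. lra. }
  pose f := fun x => cc * x - cc + 1 - / x - ln x.
  have Hinc : f 1 < f v.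
  { apply: (incr_function_le f (Finite 1) p_infty (fun x => cc + / (x*x) - / x)).
    - move=> x Hx _. rewrite /= in Hx. rewrite /f. auto_derive.
      + repeat split; lra.
      + field. lra.
    - move=> x Hx _. rewrite /= in Hx. have := cc_gt => Hc.
      have H0 : 0 < / x by apply: Rinv_0_lt_compat; lra.
      have H1 : / (x*x) = / x * / x by field; lra.
      rewrite H1. have : 0 <= (/x - /2)*(/x - /2) by apply: Rle_0_sqr.
      rewrite /Rgt; lra.
    - rewrite /=; lra.
    - lra.
    - by []. }
  rewrite /f ln_1 in Hinc.
  have : (v - 1) * (cc + / v) = cc * v - cc + 1 - / v by field; lra.
  lra.
Qed.

Lemma ln_le_xm1 x : 0 < x -> ln x <= x - 1.
Proof. move=> Hx. have := exp_ineq1_le (ln x). rewrite exp_ln; lra. Qed.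

Lemma le_of_ln x y : 0 < x -> 0 < y -> ln x <= ln y -> x <= y.
Proof.
  move=> Hx Hy H. destruct (Rle_or_lt x y) as [h|h]; auto.
  have := ln_increasing y x Hy h. lra.
Qed.

Lemma entR (m j : nat) : (1 <= m)%nat ->
  INR m ^ m * INR (m + j) ^ j <= exp (cc * INR m) * (INR j ^ j * INR (m + j) ^ m).
Proof.
  move=> Hm.
  have Hcc := cc_gt.
  have HM : 1 <= INR m by apply: (le_INR 1); apply/ssrnat.leP.
  have [j0|jpos] := posnP j.
  { rewrite j0 addn0 /=.
    have := exp_ineq1_le (cc * INR m).
    have : 0 <= cc * INR m by apply: Rmult_le_pos; lra.
    have : 0 < INR m ^ m by apply: pow_lt; lra.
    nra. }
  have HJ : 1 <= INR j by apply: (le_INR 1); apply/ssrnat.leP.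
  rewrite plus_INR.
  move: HJ HM. set M := INR m. set J := INR j. move=> HJ HM.
  have HN : 0 < M + J by lra.
  apply: le_of_ln.
  - apply: Rmult_lt_0_compat; apply: pow_lt; lra.
  - apply: Rmult_lt_0_compat; [apply: exp_pos|apply: Rmult_lt_0_compat; apply: pow_lt; lra].
  - rewrite !ln_mult; try (apply: pow_lt; lra); try apply: exp_pos;
      try (apply: Rmult_lt_0_compat; apply: pow_lt; lra).
    rewrite ln_exp !ln_pow; try lra.
    rewrite -/M -/J.
    have H1 : ln M - ln (M + J) <= M / (M + J) - 1.
    { have -> : ln M - ln (M + J) = ln (M / (M + J)).
      { rewrite /Rdiv ln_mult; try lra; last by apply: Rinv_0_lt_compat; lra.
        rewrite ln_Rinv; lra. }
      apply: ln_le_xm1. apply: Rdiv_lt_0_compat; lra. }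
    have H2 : ln (M + J) - ln J <= ((M + J) / J - 1) * (cc + / ((M + J) / J)).
    { have -> : ln (M + J) - ln J = ln ((M + J) / J).
      { rewrite /Rdiv ln_mult; try lra; last by apply: Rinv_0_lt_compat; lra.
        rewrite ln_Rinv; lra. }
      apply: lnL. apply: (Rmult_le_reg_r J); first lra.
      rewrite /Rdiv Rmult_assoc Rinv_l; lra. }
    have E2 : ((M + J) / J - 1) * (cc + / ((M + J) / J)) = M / J * cc + M / (M + J).
    { field. lra. }
    rewrite E2 in H2.
    have H1' : M * (ln M - ln (M + J)) <= M * (M / (M + J) - 1) by apply: Rmult_le_compat_l; lra.
    have H2' : J * (ln (M + J) - ln J) <= J * (M / J * cc + M / (M + J)) by apply: Rmult_le_compat_l; lra.
    have E3 : M * (M / (M + J) - 1) + J * (M / J * cc + M / (M + J)) = cc * M by field; lra.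
    lra.
Qed.

End RealPart.

Section RealPart2.
Local Open Scope R_scope.

Lemma INRM a b : INR (a * b)%N = INR a * INR b.
Proof. by rewrite -mult_INR. Qed.

Lemma INRX a b : INR (a ^ b)%N = INR a ^ b.
Proof. elim: b => [|b IH]; first by rewrite expn0. by rewrite expnS INRM IH. Qed.

Lemma INR_le a b : (a <= b)%N -> INR a <= INR b.
Proof. by move=> h; apply: le_INR; apply/ssrnat.leP. Qed.

Lemma core (b C E Q Nm Nj Mm Jj p4 p3 : R) :
  0 <= b -> 0 <= C -> 0 <= E -> 0 <= Q -> 0 < Nm -> 0 <= Nj -> 0 <= Mm -> 0 < Jj -> 0 < p4 -> 0 <= p3 ->
  b * p4 * (Nm * Nm) <= C * p3 * (Mm * Mm) * Q ->
  C * (Mm * Jj) <= Nm * Nj ->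
  Mm * Nj <= E * (Jj * Nm) ->
  b * p4 <= p3 * E * Q.
Proof.
move=> hb hC hE hQ hNm hNj hMm hJj hp4 hp3 A1 A2 A3.
have S1 : b * p4 * (Nm * Nm) * Jj <= C * p3 * (Mm * Mm) * Q * Jj
  by apply: Rmult_le_compat_r; lra.
have S2 : C * p3 * (Mm * Mm) * Q * Jj <= (Nm * Nj) * (p3 * Mm * Q).
  have -> : C * p3 * (Mm * Mm) * Q * Jj = (C * (Mm * Jj)) * (p3 * Mm * Q) by ring.
  apply: Rmult_le_compat_r => //.
  apply: Rmult_le_pos => //; apply: Rmult_le_pos => //.
have S3 : (Nm * Nj) * (p3 * Mm * Q) <= (E * (Jj * Nm)) * (p3 * Nm * Q).
  have -> : (Nm * Nj) * (p3 * Mm * Q) = (Mm * Nj) * (p3 * Nm * Q) by ring.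
  apply: Rmult_le_compat_r => //.
  apply: Rmult_le_pos => //; apply: Rmult_le_pos; lra.
have : (b * p4) * (Nm * Nm * Jj) <= (p3 * E * Q) * (Nm * Nm * Jj).
  have -> : (b * p4) * (Nm * Nm * Jj) = b * p4 * (Nm * Nm) * Jj by ring.
  have -> : (p3 * E * Q) * (Nm * Nm * Jj) = (E * (Jj * Nm)) * (p3 * Nm * Q) by ring.
  lra.
move=> h; apply: (Rmult_le_reg_r (Nm * Nm * Jj)) => //.
apply: Rmult_lt_0_compat => //; apply: Rmult_lt_0_compat => //.
Qed.

End RealPart2.


Open Scope nat_scope.

Definition compat n r (s0 s1 : 'I_r) (S : {set 'I_n}) (g : {ffun 'I_n -> 'I_3})
  (tau : trans n r) : bool :=
  [forall t in S, [&& tau (t, s0) \in S, tau (t, s1) \in S,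
     g (tau (t, s0)) == g (tau (t, s1)) & g (tau (t, s0)) != g t]].

Definition phiN (k i : nat) : nat := if i == k.-1 then 2 else i %% 2.

Lemma phiN_lt3 k i : phiN k i < 3.
Proof. rewrite /phiN; case: ifP => // _; by rewrite modn2; case: odd. Qed.

Lemma phiN_ne k i : 1 < k -> i < k -> phiN k ((i + 1) %% k) != phiN k i.
Proof.
move=> hk hi; rewrite /phiN.
have [ei|nei] := eqVneq i k.-1.
  have -> : (i + 1) %% k = 0.
    by rewrite ei addn1 prednK ?modnn // (ltn_trans _ hk).
  by case: k hk {hi ei} => [|[|k']].
have hi1 : i + 1 < k.
  by move: hi nei; case: k hk => // k' _; rewrite /= addn1 ltnS leq_eqVlt => /orP[->|].
rewrite (modn_small hi1).
case: (i + 1 == k.-1); first by rewrite modn2; case: odd.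
by rewrite !modn2 addn1 /=; case: odd.
Qed.

Lemma witness n r m k (s0 s1 : 'I_r) (tau : trans n r) :
  1 < k ->
  has_periodic_class tau m k ->
  exists (S : {set 'I_n}) (g : {ffun 'I_n -> 'I_3}),
    [/\ #|S| = m, g \in pffun_on ord0 S predT & compat s0 s1 S g tau].
Proof.
move=> hk [S [_ [_ [[_ [P [Pne [Pdis [SP Ptau]]]]] cardS]]]].
pose colN (t : 'I_n) : nat :=
  if [pick i : 'I_k | t \in P i] is Some i then phiN k i else 0.
have colP (t : 'I_n) (i : nat) : i < k -> t \in P i -> colN t = phiN k i.
  move=> ik tP; rewrite /colN; case: pickP => [i' ti'|/(_ (Ordinal ik)) /=]; last by rewrite tP.
  have [e|ne] := eqVneq (i' : nat) i; first by rewrite e.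
  have := Pdis _ _ (ltn_ord i') ik (elimN eqP ne).
  by move=> /disjointFr h; move: (h t ti'); rewrite tP.
have inS (t : 'I_n) : reflect (exists2 i, i < k & t \in P i) (t \in S).
  rewrite SP; apply: (iffP bigcupP) => [[i _ ti]|[i ik ti]].
    by exists i.
  by exists (Ordinal ik).
pose g := [ffun t => if t \in S then (inord (colN t) : 'I_3) else ord0].
exists S, g; split => //.
  apply/pffun_onP; split; last by move=> x.
  apply/subsetP => x; rewrite inE /g ffunE; by case: (x \in S).
apply/forall_inP => t tS.
have [i ik ti] := inS t tS.
have k0 : 0 < k by apply: ltn_trans hk.
have jk : (i + 1) %% k < k by rewrite ltn_pmod.
have tauP s : tau (t, s) \in P ((i + 1) %% k).
  rewrite -(Ptau _ ik) /tau1; apply: imset_f; by rewrite in_setX ti in_setT.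
have tauS s : tau (t, s) \in S by apply/inS; exists ((i + 1) %% k).
have gv s : g (tau (t, s)) = inord (phiN k ((i + 1) %% k)).
  by rewrite /g ffunE tauS (colP _ _ jk (tauP s)).
have gt : g t = inord (phiN k i) by rewrite /g ffunE tS (colP _ _ ik ti).
rewrite !tauS !gv gt eqxx /=.
apply/eqP => /(f_equal (@nat_of_ord 3)); rewrite !inordK ?phiN_lt3 //.
by apply/eqP; apply: phiN_ne.
Qed.

Definition sN n (S : {set 'I_n}) (g : {ffun 'I_n -> 'I_3}) (t : 'I_n) : nat :=
  #|[set p : 'I_n * 'I_n | [&& p.1 \in S, p.2 \in S, g p.1 == g p.2 & g p.1 != g t]]|.

Lemma foldr_prod (T : finType) (F : T -> nat) :
  foldr muln 1 [seq F x | x : T] = \prod_(x : T) F x.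
Proof.
rewrite /image_mem -big_enum /=.
by elim: (enum _) => [|x s IH]; rewrite ?big_nil ?big_cons //= IH.
Qed.

Lemma compat_card n r (s0 s1 : 'I_r) (x0 : 'I_n) (S : {set 'I_n}) (g : {ffun 'I_n -> 'I_3}) : s0 != s1 ->
  #|[set tau | compat s0 s1 S g tau]| <=
    (\prod_(t in S) sN S g t) * n ^ (2 * (n - #|S|)) * n ^ (n * (r - 2)).
Proof.
move=> s01.
pose F (tau : trans n r) :=
  ([ffun t => (tau (t, s0), tau (t, s1))] : {ffun 'I_n -> 'I_n * 'I_n},
   [ffun p : 'I_n * 'I_r => if (p.2 == s0) || (p.2 == s1) then x0 else tau p]
     : {ffun 'I_n * 'I_r -> 'I_n}).
have Finj : injective F.
  move=> t1 t2 [e1 e2]; apply/ffunP => [[t s]].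
  have [->|ne0] := eqVneq s s0.
    by have := congr1 (fun f : {ffun 'I_n -> 'I_n * 'I_n} => (f t).1) e1; rewrite /= !ffunE.
  have [->|ne1] := eqVneq s s1.
    by have := congr1 (fun f : {ffun 'I_n -> 'I_n * 'I_n} => (f t).2) e1; rewrite /= !ffunE.
  by have := congr1 (fun f : {ffun 'I_n * 'I_r -> 'I_n} => f (t, s)) e2; rewrite /= !ffunE /= (negbTE ne0) (negbTE ne1).
pose A (t : 'I_n) : pred ('I_n * 'I_n) :=
  if t \in S then [pred p | [&& p.1 \in S, p.2 \in S, g p.1 == g p.2 & g p.1 != g t]]
  else predT.
pose B (p : 'I_n * 'I_r) : pred 'I_n :=
  if (p.2 == s0) || (p.2 == s1) then pred1 x0 else predT.
rewrite -(card_imset _ Finj).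
apply: (leq_trans (subset_leq_card (B := [predX family A & family B]) _)).
  apply/subsetP => y /imsetP [tau]; rewrite inE => /forall_inP cp ->.
  rewrite inE /=; apply/andP; split; apply/familyP => x; rewrite !ffunE.
    rewrite /A; case: ifP => // xS.
    by rewrite inE /=; have := cp x xS.
  by rewrite /B; case: ifP => _ //; rewrite inE.
rewrite (cardX (family A) (family B)) !card_family !foldr_prod leq_mul //.
  rewrite (bigID (mem S)) /= leq_mul //.
    apply: eq_leq; apply: eq_bigr => t tS; rewrite /A tS /sN.
    by apply: eq_card => p; rewrite inE.
  rewrite (eq_bigr (fun _ => n * n)); last first.
    move=> t tS; rewrite /A (negbTE tS).
    have -> : #|(predT : pred ('I_n * 'I_n))| = #|{: 'I_n * 'I_n}| by apply: eq_card.
    by rewrite card_prod card_ord.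
  rewrite prod_nat_const mulnn -expnM.
  have := cardsC S; rewrite card_ord => hc.
  apply: eq_leq; congr (_ ^ _); congr (2 * _).
  have hc' : #|~: S| = n - #|S| by have := f_equal (fun x => x - #|S|) hc; rewrite /= addKn.
  rewrite -hc'; apply: eq_card => t; by rewrite !inE.
rewrite (eq_bigr (fun x => if ~~ ((x.2 == s0) || (x.2 == s1)) then n else 1)); last first.
  move=> x _; rewrite /B; case: ifP => _ /=; first by rewrite card1.
  by rewrite -[RHS](card_ord n); apply: eq_card.
rewrite -big_mkcond prod_nat_const.
apply: eq_leq; congr (_ ^ _).
have e2 : #|~: [set s0; s1]| = r - 2.
  have := cardsC [set s0; s1]; rewrite cards2 s01 card_ord => hc.
  by have := f_equal (fun x => x - 2) hc; rewrite /= addKn.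
rewrite -e2 -[in RHS](card_ord n) -cardX; apply: eq_card => -[t s].
by rewrite !inE.
Qed.

Lemma nat_AGM (T : finType) (A : {pred T}) (E : T -> nat) :
  #|A| ^ #|A| * \prod_(i in A) E i <= (\sum_(i in A) E i) ^ #|A|.
Proof.
have [A0|A0] := posnP #|A|; first by rewrite A0 !expn0 mul1n (big_pred0 _ _ _ _ (card0_eq A0)).
have H := Order.le_of_leif (@leif_AGM rat T A (fun i => ((E i)%:R)%R) (fun i _ => ler0n _ _)).
move: H; rewrite -natr_prod -natr_sum /= expr_div_n ler_pdivlMr ?exprn_gt0 ?ltr0n //.
by rewrite -!natrX -natrM ler_nat mulnC.
Qed.

Definition Bc n (S : {set 'I_n}) (g : {ffun 'I_n -> 'I_3}) (x : 'I_n) : nat :=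
  #|[set y in S | g y == g x]|.

Lemma sN_sum n (S : {set 'I_n}) g t :
  sN S g t = \sum_(x in S | g x != g t) Bc S g x.
Proof.
rewrite /sN /Bc.
rewrite (eq_bigr (fun x => \sum_(y in S | g y == g x) 1)); last first.
  by move=> x _; rewrite -sum1_card; apply: eq_bigl => y; rewrite !inE.
rewrite pair_big_dep /= -sum1_card; apply: eq_bigl => -[x y] /=.
rewrite !inE /= [g y == g x]eq_sym.
by case: (x \in S); case: (y \in S); case: (g x == g y); case: (g x != g t).
Qed.

Lemma sumsN n (S : {set 'I_n}) g :
  4 * \sum_(t in S) sN S g t <= #|S| ^ 3.
Proof.
have e : \sum_(t in S) sN S g t = \sum_(x in S) Bc S g x * (#|S| - Bc S g x).
  under eq_bigr do rewrite sN_sum.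
  rewrite (exchange_big_dep (mem S)) /=; last by move=> ? ? ? /andP[].
  apply: eq_bigr => x xS.
  rewrite sum_nat_const mulnC; congr (_ * _).
  have := cardsID [set t | g t == g x] S.
  have -> : S :&: [set t | g t == g x] = [set y in S | g y == g x].
    by apply/setP => y; rewrite !inE.
  move=> h; rewrite -h /Bc addKn; apply: eq_card => t.
  rewrite unfold_in /= !inE xS /= [g x == _]eq_sym.
  by case: (t \in S); case: (_ == _).
rewrite e big_distrr /=.
apply: (@leq_trans (\sum_(x in S) #|S| ^ 2)).
  apply: leq_sum => x xS.
  have : Bc S g x <= #|S| by apply: subset_leq_card; apply/subsetP => y; rewrite inE => /andP[].
  move=> h; move: (Bc S g x) (#|S|) h => b M h.
  rewrite -{2}(subnKC h); exact: (nat_AGM2 b (M - b)).1.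
by rewrite sum_nat_const expnS.
Qed.

Lemma prod_sN n (S : {set 'I_n}) g :
  4 ^ #|S| * \prod_(t in S) sN S g t <= #|S| ^ (2 * #|S|).
Proof.
set m := #|S|.
have [m0|m0] := posnP m; first by rewrite m0 (big_pred0 _ _ _ _ (card0_eq m0)).
have mm : 0 < m ^ m by rewrite expn_gt0 m0.
rewrite -(leq_pmul2l mm) mulnA [m ^ m * _]mulnC -mulnA.
apply: (leq_trans (leq_mul (leqnn _) (nat_AGM (mem S) (sN S g)))).
rewrite -/m -expnMn -expnD.
have -> : m + 2 * m = 3 * m by rewrite mulSn.
rewrite expnM leq_exp2r //.
exact: sumsN.
Qed.


Lemma pbP (P : Prop) : pb P -> P.
Proof. by rewrite /pb; case: excluded_middle_informative. Qed.

Lemma bad_card n r m k : 1 < r -> 0 < n -> 1 < k -> m <= n ->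
  #|[set tau : trans n r | pb (has_periodic_class tau m k)]| * 4 ^ m * n ^ (2 * m)
    <= 'C(n, m) * 3 ^ m * m ^ (2 * m) * n ^ (r * n).
Proof.
move=> hr hn hk hm.
have r0 : 0 < r by apply: ltn_trans hr.
pose s0 : 'I_r := Ordinal r0. pose s1 : 'I_r := Ordinal hr.
have s01 : s0 != s1 by [].
pose x0 : 'I_n := Ordinal hn.
set bad := [set tau : trans n r | _].
pose D := [set S : {set 'I_n} | #|S| == m].
pose G (S : {set 'I_n}) := pffun_on (ord0 : 'I_3) S predT.
pose K := m ^ (2 * m) * n ^ (2 * (n - m)) * n ^ (n * (r - 2)).
have h1 : #|bad| <= \sum_(S in D) \sum_(g in G S) #|[set tau | compat s0 s1 S g tau]|.
  rewrite -sum1_card.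
  apply: (@leq_trans (\sum_(tau in bad) \sum_(S in D) \sum_(g in G S) (compat s0 s1 S g tau : nat))).
    apply: leq_sum => tau; rewrite inE => /pbP /(witness s0 s1 hk) [S [g [cS gP cp]]].
    rewrite (bigD1 S) /=; last by rewrite inE cS.
    rewrite (bigD1 g) //= cp.
    exact: leq_trans (leq_addr _ _) (leq_addr _ _).
  apply: (@leq_trans (\sum_tau \sum_(S in D) \sum_(g in G S) (compat s0 s1 S g tau : nat))).
    by rewrite [X in _ <= X](bigID (mem bad)) /= leq_addr.
  rewrite exchange_big /=; apply: leq_sum => S _.
  rewrite exchange_big /=; apply: leq_sum => g _.
  rewrite -sum1_card [X in _ <= X]big_mkcond /=; apply: eq_leq; apply: eq_bigr => tau _.
  by rewrite inE; case: (compat _ _ _ _ _).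
have h2 : #|bad| * 4 ^ m <= \sum_(S in D) \sum_(g in G S) K.
  apply: (leq_trans (leq_mul h1 (leqnn _))).
  rewrite big_distrl /=; apply: leq_sum => S; rewrite inE => /eqP cS.
  rewrite big_distrl /=; apply: leq_sum => g _.
  apply: (leq_trans (leq_mul (compat_card x0 S g s01) (leqnn _))).
  rewrite /K mulnC !mulnA -cS.
  apply: leq_mul => //; apply: leq_mul => //; exact: prod_sN.
rewrite (eq_bigr (fun S => 3 ^ m * K)) in h2; last first.
  move=> S; rewrite inE => /eqP cS.
  rewrite sum_nat_const card_pffun_on cS; congr (_ ^ _ * _).
  by rewrite -[RHS](card_ord 3); apply: eq_card.
rewrite sum_nat_const card_draws card_ord in h2.
apply: (leq_trans (leq_mul h2 (leqnn _))).
rewrite /K !mulnA -!mulnA; do 3 (apply: leq_mul => //).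
rewrite -!expnD; apply: eq_leq; congr (_ ^ _).
have -> : r = (r - 2) + 2 by rewrite subnK.
rewrite addnK; nia.
Qed.

Lemma entropy_nat n m : m <= n -> 'C(n, m) * (m ^ m * (n - m) ^ (n - m)) <= n ^ n.
Proof.
move=> hm.
have hi : n - m < n.+1 by rewrite ltnS leq_subr.
rewrite -{3 4}(subnKC hm) expnDn (bigD1 (Ordinal hi)) //= bin_sub // subKn //.
by rewrite addKn leq_addr.
Qed.

Open Scope R_scope.

Theorem lemma3 (r : nat) (hr : (2 <= r)%N) :
  exists alpha C' : R, Rlt 0 alpha /\ Rlt 0 C' /\
    forall n m k : nat, (1 <= n)%N -> (m <= n)%N -> (2 <= k)%N -> (k <= m)%N ->
      Rle (prob_periodic n r m k) (Rmult C' (exp (Ropp (Rmult alpha (INR m))))).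
Proof.
exists (Rminus (ln (4/3)) cc), R1; split; [|split].
- rewrite /cc; have : Rlt (ln (33/25)) (ln (4/3)) by apply: ln_increasing; lra.
  lra.
- lra.
move=> n m k hn hm hk hkm.
have hm1 : (1 <= m)%N by apply: leq_trans hkm; apply: leq_trans hk.
set B := #|[set tau : trans n r | pb (has_periodic_class tau m k)]|.
have hA : #|[set A : dfa n r | pb (has_periodic_class A.1.2 m k)]| = (n * B * 2 ^ n)%N.
  have -> : #|[set A : dfa n r | pb (has_periodic_class A.1.2 m k)]| =
      #|[predX [predX (predT : pred 'I_n) & [set tau : trans n r | pb (has_periodic_class tau m k)]]
          & (predT : pred {ffun 'I_n -> bool})]|.
    by apply: eq_card => -[[q t] f]; rewrite !inE /= andbT.
  rewrite !cardX.
  have -> : #|(predT : pred 'I_n)| = n by rewrite -[RHS](card_ord n); apply: eq_card.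
  have -> : #|(predT : pred {ffun 'I_n -> bool})| = (2 ^ n)%N.
    transitivity #|{ffun 'I_n -> bool}|; first by apply: eq_card.
    by rewrite card_ffun card_bool card_ord.
  by [].
have hT : #|[set: dfa n r]| = (n * n ^ (n * r) * 2 ^ n)%N.
  by rewrite cardsT !card_prod !card_ffun card_prod !card_ord card_bool.
rewrite /prob_periodic hA hT !INRM !INRX.
have hn0 : (0 < n)%N by [].
have Npos : 0 < INR n by apply: lt_0_INR; apply/ssrnat.ltP.
have hk1 : (1 < k)%N by [].
have hr1 : (1 < r)%N by [].
have A1 := bad_card hr1 hn0 hk1 hm.
rewrite -/B in A1; move/INR_le: A1; rewrite !INRM !INRX.
have e2 : (2 * m)%N = (m + m)%N by rewrite addnn mul2n.
rewrite e2 !pow_add => A1.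
have A2 := entropy_nat hm; move/INR_le: A2; rewrite !INRM !INRX => A2.
have en : INR n ^ n = INR n ^ m * INR n ^ (n - m).
  by rewrite -pow_add; congr (_ ^ _); symmetry; exact: (subnKC hm).
rewrite en in A2.
have A3 := entR (n - m) hm1; rewrite (subnKC hm) in A3.
have Jpos : 0 < INR (n - m) ^ (n - m).
  rewrite -INRX; apply: lt_0_INR; apply/ssrnat.ltP; by rewrite expn_gt0 orbC; case: (n - m)%N.
have key := @core (INR B) (INR 'C(n, m)) (exp (cc * INR m)) (INR n ^ (r * n))
  (INR n ^ m) (INR n ^ (n - m)) (INR m ^ m) (INR (n - m) ^ (n - m)) (INR 4 ^ m) (INR 3 ^ m)
  (pos_INR _) (pos_INR _) (Rlt_le _ _ (exp_pos _))
  (pow_le _ _ (Rlt_le _ _ Npos)) (pow_lt _ _ Npos) (pow_le _ _ (Rlt_le _ _ Npos))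
  (pow_le _ _ (pos_INR _)) Jpos.
have h4 : 0 < INR 4 ^ m by apply: pow_lt; apply: lt_0_INR; apply/ssrnat.ltP.
have h3 : 0 <= INR 3 ^ m by apply: pow_le; apply: pos_INR.
have {key} key := key h4 h3 A1 A2 A3.
have eln : ln (3/4) = - ln (4/3).
  rewrite -ln_Rinv; last lra. f_equal; field.
have eexp : exp (- ((ln (4/3) - cc) * INR m)) = (3/4)^m * exp (cc * INR m).
  have -> : - ((ln (4/3) - cc) * INR m) = ln (3/4) * INR m + cc * INR m by rewrite eln; ring.
  rewrite exp_plus; f_equal.
  rewrite Rmult_comm -ln_pow; last lra.
  rewrite exp_ln //; apply: pow_lt; lra.
rewrite eexp.
have Qpos : 0 < INR n ^ (n * r) by apply: pow_lt.
have P2 : 0 < INR 2 ^ n by apply: pow_lt; simpl; lra.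
have e34 : INR 3 ^ m = (3/4)^m * INR 4 ^ m.
  rewrite -Rpow_mult_distr; f_equal; simpl; lra.
rewrite e34 [(r * n)%N]mulnC in key.
have kb : INR B <= (3/4)^m * exp (cc * INR m) * INR n ^ (n * r).
  apply: (Rmult_le_reg_r (INR 4 ^ m)) => //.
  have -> : (3/4)^m * exp (cc * INR m) * INR n ^ (n * r) * INR 4 ^ m =
    (3/4)^m * INR 4 ^ m * exp (cc * INR m) * INR n ^ (n * r) by ring.
  exact: key.
have -> : INR n * INR B * INR 2 ^ n / (INR n * INR n ^ (n * r) * INR 2 ^ n) =
  INR B / INR n ^ (n * r).
  field; split; lra.
rewrite Rmult_1_l /Rdiv.
apply: (Rmult_le_reg_r (INR n ^ (n * r))) => //.
rewrite Rmult_assoc Rinv_l; lra.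
Qed.
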